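(* Let $\mathcal{H}=(V,E)$ be a hypergraph with $|V|=n$ and let $\sigma:[n]\to V$ be a bijection. (a) Let $d=|V|-\operatorname{alt}(\mathcal{H},\sigma)-1$ and suppose $\operatorname{alt}(\mathcal{H},\sigma)\neq|V|$. Then there is a map $\varphi:V\to S^d$ (a multiset $Z\subset S^d$ of size $|V|$ identified with $V$) such that for every $x\in S^d$, there is an edge $e\in E$ with $\varphi(e)\subseteq H(x)$ or $\varphi(e)\subseteq H(-x)$. Moreover, if $d\geq1$, $\varphi$ can be chosen injective. (b) Let $d=|V|-\operatorname{salt}(\mathcal{H},\sigma)-1$ and suppose $\operatorname{salt}(\mathcal{H},\sigma)\neq|V|$. Then there is a map $\varphi:V\to S^d$ (a multiset $Z\subset S^d$ of size $|V|$ identified with $V$) such that for every $x\in S^d$, there is an edge $e\in E$ with $\varphi(e)\subseteq H(x)$. Moreover, if $d\geq1$, $\varphi$ can be chosen injective.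
   Context: A hypergraph $\mathcal{H}=(V,E)$ consists of a finite nonempty vertex set $V$ and a family $E$ of distinct nonempty subsets of $V$ (edges). For $U\subseteq V$, $\mathcal{H}[U]$ is the induced subhypergraph with vertex set $U$ and edge set $\{e\in E:e\subseteq U\}$. $[n]=\{1,\dots,n\}$. $S^d\subset\mathbb{R}^{d+1}$ is the unit sphere and $H(x)=\{y\in S^d:\langle x,y\rangle>0\}$ is the open hemisphere centered at $x$. For $X=(x_1,\dots,x_n)\in\{+,-,0\}^n$, an alternating subsequence is a subsequence of nonzero terms in which consecutive terms have different signs; $\operatorname{alt}(X)$ is the maximum length of such a subsequence ($\operatorname{alt}(0,\dots,0)=0$). $X^+=\{j:x_j=+\}$, $X^-=\{j:x_j=-\}$. $$\operatorname{alt}(\mathcal{H},\sigma)=\max\{\operatorname{alt}(X):X\in\{+,-,0\}^n,\ \max(|E(\mathcal{H}[\sigma(X^+)])|,|E(\mathcal{H}[\sigma(X^-)])|)=0\},$$ $$\operatorname{salt}(\mathcal{H},\sigma)=\max\{\operatorname{alt}(X):X\in\{+,-,0\}^n,\ \min(|E(\mathcal{H}[\sigma(X^+)])|,|E(\mathcal{H}[\sigma(X^-)])|)=0\}.$$ *)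

(* Defs.v *)
From HB Require Import structures.
From mathcomp Require Import all_boot all_order all_algebra.
From mathcomp Require Import reals.
Set Implicit Arguments. Unset Strict Implicit. Unset Printing Implicit Defensive.
Import Order.TTheory GRing.Theory Num.Theory.

(* Sign vectors X in {+,-,0}^n : Some true = +, Some false = -, None = 0. *)
Definition signvec (n : nat) := {ffun 'I_n -> option bool}.

Definition nonzero_terms n (X : signvec n) : seq bool :=
  pmap (fun i => X i) (enum 'I_n).

Definition alternating (t : seq bool) : bool := sorted (fun a b => a != b) t.

Definition altX n (X : signvec n) : nat :=
  \max_(m : n.-tuple bool | alternating (mask m (nonzero_terms X)))
     size (mask m (nonzero_terms X)).

Definition Xplus n (X : signvec n) : {set 'I_n} := [set j | X j == Some true].
Definition Xminus n (X : signvec n) : {set 'I_n} := [set j | X j == Some false].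

Definition n_induced_edges (V : finType) (E : {set {set V}}) (U : {set V}) : nat :=
  #|[set e in E | e \subset U]|.

Definition alt_hyp (V : finType) (E : {set {set V}}) n (sigma : 'I_n -> V) : nat :=
  \max_(X : signvec n |
        maxn (n_induced_edges E (sigma @: Xplus X))
             (n_induced_edges E (sigma @: Xminus X)) == 0) altX X.

Definition salt_hyp (V : finType) (E : {set {set V}}) n (sigma : 'I_n -> V) : nat :=
  \max_(X : signvec n |
        minn (n_induced_edges E (sigma @: Xplus X))
             (n_induced_edges E (sigma @: Xminus X)) == 0) altX X.

Local Open Scope ring_scope.

Definition dotp (R : realType) k (x y : 'rV[R]_k) : R := \sum_(i < k) x 0 i * y 0 i.

Definition on_sphere (R : realType) k (x : 'rV[R]_k) : Prop := dotp x x = 1.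

Definition in_hemisphere (R : realType) k (x y : 'rV[R]_k) : Prop := 0 < dotp x y.

(* Main.v *)
Require Import Defs.
From HB Require Import structures.
From mathcomp Require Import all_boot all_order all_algebra.
From mathcomp Require Import reals.
Import Order.TTheory GRing.Theory Num.Theory.
Set Implicit Arguments. Unset Strict Implicit. Unset Printing Implicit Defensive.

Lemma mask_pad (T : Type) (m m2 : bitseq) (s : seq T) :
  size m = size s -> mask (m ++ m2) s = mask m s.
Proof.
elim: m s => [|b m IH] [|x s] //=; first by case: m2.
by move=> [/IH ->].
Qed.

Lemma altX_ge n (X : signvec n) t :
  subseq t (nonzero_terms X) -> alternating t -> (size t <= altX X)%N.
Proof.
move=> /subseqP [m sm ->] alt.
have hs : (size (nonzero_terms X) <= n)%N.
  by rewrite /nonzero_terms size_pmap (leq_trans (count_size _ _)) // size_enum_ord.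
pose m' := m ++ nseq (n - size m) false.
have sz : size m' == n by rewrite size_cat size_nseq sm subnKC.
have e : mask m (nonzero_terms X) = mask (Tuple sz) (nonzero_terms X).
  by rewrite /= /m' mask_pad.
rewrite e in alt *. rewrite /altX. by apply: (leq_bigmax_cond (Tuple sz)).
Qed.

Lemma subseq_cat_split (T : eqType) (t a b : seq T) :
  subseq t (a ++ b) -> exists t1 t2, [/\ t = t1 ++ t2, subseq t1 a & subseq t2 b].
Proof.
move=> /subseqP [m sm ->].
rewrite -(cat_take_drop (size a) m) mask_cat; last first.
  by rewrite size_takel // sm size_cat leq_addr.
by exists (mask (take (size a) m) a), (mask (drop (size a) m) b); split; rewrite ?mask_subseq.
Qed.

Lemma alt_neg t : alternating (map negb t) = alternating t.
Proof.
rewrite /alternating; case: t => //= x s; rewrite path_map.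
by apply: eq_path => u v /=; case: u; case: v.
Qed.

Lemma alt_cat x s1 s2 : alternating (x :: s1 ++ s2) =
  [&& alternating (x :: s1), (if s2 is y :: _ then last x s1 != y else true) & alternating s2].
Proof.
rewrite /alternating /= cat_path; case: s2 => [|y s2] /=; first by rewrite !andbT.
by rewrite andbA.
Qed.

Lemma altJ1 t1 t2 : alternating (t1 ++ t2) ->
  exists t2', [/\ subseq t2' t2, (size t2 <= (size t2').+1)%N & alternating (map negb t1 ++ t2')].
Proof.
case: t1 => [|x t1] h; first by exists t2; split.
case: t2 h => [|y t2] h.
  by exists [::]; split => //; rewrite cats0 alt_neg; rewrite cats0 in h.
move: h; rewrite alt_cat => /and3P [h1 h2 h3].
have h1' : alternating (~~ x :: map negb t1).
  by rewrite -[_ :: _]/(map negb (x :: t1)) alt_neg.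
case e: (~~ last x t1 != y).
  exists (y :: t2); split => //.
  by rewrite -[_ ++ _]/(~~ x :: (map negb t1 ++ y :: t2)) alt_cat h1' last_map /= e; exact: h3.
exists t2; split => //; first exact: subseq_cons.
have h3' : alternating t2 by move: h3; rewrite /alternating /=; apply: path_sorted.
rewrite -[_ ++ _]/(~~ x :: (map negb t1 ++ t2)) alt_cat h1' last_map h3' andbT.
case: t2 h3 {h3'} => // z t2; rewrite /alternating /= => /andP [yz _].
by move: e h2 yz; case: (last x t1); case: y; case: z.
Qed.

Lemma altJ2 t1 c t2 : alternating (t1 ++ c :: t2) ->
  alternating (map negb t1 ++ t2).
Proof.
case: t1 => [|x t1] h.
  by move: h; rewrite /alternating /=; apply: path_sorted.
move: h; rewrite alt_cat => /and3P [h1 h2 h3].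
have h1' : alternating (~~ x :: map negb t1).
  by rewrite -[_ :: _]/(map negb (x :: t1)) alt_neg.
rewrite -[_ ++ _]/(~~ x :: (map negb t1 ++ t2)) alt_cat h1' last_map /=.
have h3' : alternating t2 by move: h3; rewrite /alternating /=; apply: path_sorted.
rewrite h3' andbT.
case: t2 h3 {h3'} => // z t2; rewrite /alternating /= => /andP [yz _].
by move: h2 yz; case: (last x t1); case: c; case: z.
Qed.

Lemma stepS1 t a b : subseq t (a ++ b) -> alternating t ->
  exists t', [/\ subseq t' (map negb a ++ b), alternating t' & (size t <= (size t').+1)%N].
Proof.
move=> /subseq_cat_split [t1 [t2 [-> s1 s2]]] /altJ1 [t2' [s2' sz al]].
exists (map negb t1 ++ t2'); split => //.
  by rewrite cat_subseq ?map_subseq // (subseq_trans s2').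
by rewrite !size_cat size_map -addnS leq_add2l.
Qed.

Lemma stepS2 t a c b : subseq t (a ++ c :: b) -> alternating t ->
  exists t', [/\ subseq t' (map negb a ++ b), alternating t' & (size t <= (size t').+1)%N].
Proof.
move=> /subseq_cat_split [t1 [t2 [-> s1 s2]]] al.
case: t2 s2 al => [|y t2] s2 al.
  apply: stepS1 al; rewrite cats0 in s1 *; exact: (subseq_trans s1 (prefix_subseq _ _)).
move: s2 => /=; case: eqP => [-> s2|_ s2].
  exists (map negb t1 ++ t2); split.
  - by rewrite cat_subseq ?map_subseq.
  - exact: altJ2 al.
  - by rewrite !size_cat size_map addnS.
by apply: stepS1 al; rewrite cat_subseq.
Qed.
From Stdlib Require Import Classical.
From mathcomp Require Import zify.
Local Open Scope ring_scope.

Definition sg (R : realType) (r : R) : option bool :=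
  if r == 0 then None else Some (0 < r).

Definition Yp (R : realType) (p : {poly R}) n :=
  [seq sg ((-1) ^+ i * p.[i%:R]) | i <- iota 0 n].

Lemma sg_mulneg (R : realType) (r c : R) : c < 0 -> sg (r * c) = omap negb (sg r).
Proof.
move=> c0; rewrite /sg mulf_eq0 (negbTE (ltr0_neq0 c0)) orbF.
case: eqP => //= /eqP r0; congr Some.
by rewrite nmulr_lgt0 // ltNge le_eqVlt eq_sym (negbTE r0).
Qed.

Lemma sg_mulpos (R : realType) (r c : R) : 0 < c -> sg (r * c) = sg r.
Proof.
move=> c0; rewrite /sg mulf_eq0 (negbTE (lt0r_neq0 c0)) orbF.
by case: eqP => //= _; rewrite pmulr_lgt0.
Qed.

Lemma pmap_neg (A : seq (option bool)) :
  pmap id (map (omap negb) A) = map negb (pmap id A).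
Proof. by elim: A => [|[[]|] A IH] //=; rewrite IH. Qed.

Lemma pmap_some (T : Type) (f : nat -> T) l :
  pmap id [seq Some (f i) | i <- l] = map f l.
Proof. by elim: l => //= i l ->. Qed.

Lemma split_nat (R : realType) (a : R) n : exists2 k, (k <= n)%N &
  (forall i, (i < k)%N -> i%:R < a) /\ (forall i, (k <= i)%N -> (i < n)%N -> a <= i%:R).
Proof.
elim: n => [|n [k kn [lt hi]]]; first by exists 0%N.
case: (ltngtP k n) => kn'.
- exists k => //; first exact: ltnW.
  split => // i ki; rewrite ltnS leq_eqVlt => /orP [/eqP ->|]; last exact: hi.
  apply: (le_trans (hi k (leqnn k) kn')); by rewrite ler_nat ltnW.
- by move: kn; rewrite leqNgt kn'.
- subst k; case: (boolP (n%:R < a)) => na.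
  + exists n.+1 => //; split => [i|i i1 i2]; last by move: (leq_trans i2 i1); rewrite ltnn.
    rewrite ltnS leq_eqVlt => /orP [/eqP ->//|]; exact: lt.
  + exists n; first exact: leqnSn.
    split => // i ni; rewrite ltnS => ni'.
    have -> : i = n by apply/eqP; rewrite eqn_leq ni ni'.
    by rewrite leNgt.
Qed.

Lemma alt_odd (s : bool) m n : alternating [seq odd i (+) s | i <- iota m n].
Proof.
elim: n m => [|n IH] m //=; case: n IH => [|n] IH //=.
have := IH m.+1; rewrite /alternating /= => ->; rewrite andbT.
by case: (odd m); case: (s).
Qed.

Lemma baseL (R : realType) n (p : {poly R}) : (forall a, ~~ root p a) ->
  exists t, [/\ subseq t (pmap id (Yp p n)), alternating t & (n <= size t)%N].
Proof.
move=> nr.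
have H (q : {poly R}) : (forall a, ~~ root q a) -> forall v, 0 <= v -> q.[0] <= 0 -> q.[v] <= 0.
  move=> nrq v v0 q0; rewrite leNgt; apply/negP => qv.
  have [x _ rx] := poly_ivt v0 (introT andP (conj q0 (ltW qv))).
  by move: (nrq x); rewrite rx.
have nz x : p.[x] != 0 by have := nr x.
pose s0 := 0 < p.[0].
have hs (i : nat) : (0 < p.[i%:R]) = s0.
  rewrite /s0; case: (ltrgtP 0 p.[0]) => [p0|p0|p0]; last by move: (nz 0); rewrite -p0 eqxx.
  + have : (- p).[i%:R] <= 0.
      apply: H => // [a|]; first by rewrite rootN.
      by rewrite hornerN oppr_le0 ltW.
    rewrite hornerN oppr_le0 le_eqVlt eq_sym (negbTE (nz _)) /= => ->.
    by [].
  + have : p.[i%:R] <= 0 by apply: H => //; exact: ltW.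
    by rewrite leNgt => /negbTE ->.
have -> : Yp p n = [seq Some (odd i (+) s0) | i <- iota 0 n].
  apply: eq_map => i; rewrite /sg -signr_odd.
  case: (odd i); rewrite ?expr1 ?expr0 ?mulN1r ?mul1r ?oppr_eq0 (negbTE (nz _)) /=.
  - by rewrite oppr_gt0 ltNge le_eqVlt eq_sym (negbTE (nz _)) /= hs.
  - by rewrite hs.
rewrite pmap_some; exists [seq odd i (+) s0 | i <- iota 0 n]; split => //.
  exact: alt_odd.
by rewrite size_map size_iota.
Qed.

Lemma polyL (R : realType) n (p : {poly R}) : p != 0 ->
  exists t, [/\ subseq t (pmap id (Yp p n)), alternating t & (n <= size t + (size p).-1)%N].
Proof.
have [k] := ubnP (size p); elim: k p => // k IH p szp pn0.
case: (classic (exists a, root p a)) => [[a ra]|nr]; last first.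
  have nr' : forall a, ~~ root p a by move=> a; apply/negP => ra; apply: nr; exists a.
  have [t [h1 h2 h3]] := baseL n nr'.
  by exists t; split => //; exact: leq_trans h3 (leq_addr _ _).
have /factor_theorem [q pq] := ra.
have qn0 : q != 0 by apply: contraNneq pn0 => q0; rewrite pq q0 mul0r.
have szpq : size p = (size q).+1.
  by rewrite pq size_mul ?polyXsubC_eq0 // size_XsubC addn2.
have szq0 : (0 < size q)%N by rewrite size_poly_gt0.
have szqk : (size q < k)%N by rewrite -ltnS -szpq.
have [t [st alt szt]] := IH q szqk qn0.
have [k0 k0n [lt hi]] := split_nat a n.
pose f (r : {poly R}) (i : nat) := sg ((-1) ^+ i * r.[i%:R]).
have fpq i : f p i = sg ((-1) ^+ i * q.[i%:R] * (i%:R - a)).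
  by rewrite /f pq hornerM hornerXsubC mulrA.
have Yq : Yp q n = [seq f q i | i <- iota 0 k0] ++ [seq f q i | i <- iota k0 (n - k0)].
  by rewrite /Yp -map_cat -iotaD subnKC.
have Yp_ : Yp p n = [seq f p i | i <- iota 0 k0] ++ [seq f p i | i <- iota k0 (n - k0)].
  by rewrite /Yp -map_cat -iotaD subnKC.
have pre : [seq f p i | i <- iota 0 k0] = map (omap negb) [seq f q i | i <- iota 0 k0].
  rewrite -map_comp; apply/eq_in_map => i; rewrite mem_iota add0n => /andP [_ ik].
  by rewrite fpq sg_mulneg // subr_lt0 lt.
have post i : (k0 < i)%N -> (i < n)%N -> f p i = f q i.
  move=> ki iN; rewrite fpq sg_mulpos // subr_gt0.
  by apply: (le_lt_trans (hi k0 (leqnn _) (ltn_trans ki iN))); rewrite ltr_nat.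
have fin (t' : seq bool) : (size t <= (size t').+1)%N -> (n <= size t' + (size p).-1)%N.
  rewrite szpq /=; move: szt szq0; case: (size q) => //= m; lia.
rewrite Yq pmap_cat in st.
case: (boolP ((k0 < n)%N && (a == k0%:R))) => [/andP [k0n' /eqP ak]|hk].
- have sub : iota k0 (n - k0) = k0 :: iota k0.+1 (n - k0.+1) by rewrite -subnSK.
  have fp0 : f p k0 = None by rewrite fpq ak subrr mulr0 /sg eqxx.
  have post' : [seq f p i | i <- iota k0.+1 (n - k0.+1)] = [seq f q i | i <- iota k0.+1 (n - k0.+1)].
    apply/eq_in_map => i; rewrite mem_iota subnKC // => /andP [ki iN]; exact: post.
  rewrite sub /= in st.
  have Yp' : pmap id (Yp p n) = map negb (pmap id [seq f q i | i <- iota 0 k0]) ++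
                                pmap id [seq f q i | i <- iota k0.+1 (n - k0.+1)].
    by rewrite Yp_ pre pmap_cat pmap_neg sub /= fp0 post'.
  rewrite Yp'; move: st; case: (f q k0) => [c|] st.
  + by have [t' [h1 h2 h3]] := stepS2 st alt; exists t'; split => //; exact: fin.
  + by have [t' [h1 h2 h3]] := stepS1 st alt; exists t'; split => //; exact: fin.
- have post' : [seq f p i | i <- iota k0 (n - k0)] = [seq f q i | i <- iota k0 (n - k0)].
    apply/eq_in_map => i; rewrite mem_iota subnKC // => /andP [ki iN].
    rewrite fpq sg_mulpos // subr_gt0 lt_neqAle hi // andbT.
    apply/eqP => ai; move: ki; rewrite leq_eqVlt => /orP [/eqP ki|ki].
      by move: hk; rewrite ki iN ai eqxx.
    have := hi k0 (leqnn _) (ltn_trans ki iN).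
    by rewrite ai ler_nat leqNgt ki.
  have Yp' : pmap id (Yp p n) = map negb (pmap id [seq f q i | i <- iota 0 k0]) ++
                                pmap id [seq f q i | i <- iota k0 (n - k0)].
    by rewrite Yp_ pre pmap_cat pmap_neg post'.
  rewrite Yp'.
  by have [t' [h1 h2 h3]] := stepS1 st alt; exists t'; split => //; exact: fin.
Qed.

From mathcomp Require Import lra.

Definition wpt (R : realType) D n (i : 'I_n) : 'rV[R]_D :=
  \row_(k < D) ((-1) ^+ i * (i%:R) ^+ k).
Arguments wpt {R} D {n} i.
Definition nrm (R : realType) D (u : 'rV[R]_D) : 'rV[R]_D :=
  (Num.sqrt (dotp u u))^-1 *: u.
Definition sgvec (R : realType) D n (x : 'rV[R]_D) : signvec n :=
  [ffun i => sg (dotp x (wpt D i))].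

Lemma dotpZr (R : realType) D (x u : 'rV[R]_D) c : dotp x (c *: u) = c * dotp x u.
Proof. by rewrite /dotp mulr_sumr; apply: eq_bigr => k _; rewrite mxE mulrCA. Qed.

Lemma dotpZl (R : realType) D (x u : 'rV[R]_D) c : dotp (c *: x) u = c * dotp x u.
Proof. by rewrite /dotp mulr_sumr; apply: eq_bigr => k _; rewrite mxE mulrA. Qed.

Lemma dotpNl (R : realType) D (x u : 'rV[R]_D) : dotp (- x) u = - dotp x u.
Proof. by rewrite -scaleN1r dotpZl mulN1r. Qed.

Lemma dotp_w (R : realType) D n (x : 'rV[R]_D.+1) (i : 'I_n) :
  dotp x (wpt D.+1 i) = (-1) ^+ i * (\poly_(k < D.+1) x 0 (inord k)).[i%:R].
Proof.
rewrite /dotp horner_poly mulr_sumr; apply: eq_bigr => k _.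
by rewrite mxE inord_val mulrCA.
Qed.

Lemma sign_sq (R : realType) (i : nat) : (-1) ^+ i * (-1) ^+ i = 1 :> R.
Proof. by rewrite -signr_odd; case: (odd i); rewrite ?expr1 ?expr0 ?mulN1r ?opprK ?mul1r. Qed.

Lemma dotp_w_pos (R : realType) D n (i : 'I_n) : 0 < dotp (wpt D.+1 i) (wpt D.+1 i) :> R.
Proof.
rewrite /dotp big_ord_recl !mxE expr0 !mulr1 sign_sq.
have : 0 <= \sum_(k < D) wpt D.+1 i 0 (lift ord0 k) * wpt D.+1 i 0 (lift ord0 k) :> R.
  by apply: sumr_ge0 => k _; rewrite -expr2 sqr_ge0.
lra.
Qed.

Lemma nrm_sphere (R : realType) D (u : 'rV[R]_D) : 0 < dotp u u -> on_sphere (nrm u).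
Proof.
move=> up; rewrite /on_sphere /nrm dotpZl dotpZr mulrA -expr2 exprVn sqr_sqrtr ?ltW //.
by rewrite mulVf // gt_eqF.
Qed.

Lemma nrm_hemi (R : realType) D (x u : 'rV[R]_D) : 0 < dotp u u ->
  in_hemisphere x (nrm u) <-> 0 < dotp x u.
Proof.
move=> up; rewrite /in_hemisphere /nrm dotpZr pmulr_rgt0 //.
by rewrite invr_gt0 sqrtr_gt0.
Qed.

Lemma pmap_idmap (T U : Type) (f : T -> option U) s : pmap f s = pmap id (map f s).
Proof. by elim: s => //= x s ->. Qed.

Lemma altX_le n (X : signvec n) : (altX X <= n)%N.
Proof.
apply/bigmax_leqP => m _.
apply: leq_trans (size_subseq (mask_subseq _ _)) _.
by rewrite /nonzero_terms size_pmap (leq_trans (count_size _ _)) // size_enum_ord.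
Qed.

Lemma altX_sgvec (R : realType) D n (x : 'rV[R]_D.+1) : on_sphere x ->
  (n - D <= altX (sgvec n x))%N.
Proof.
move=> xs; pose p := \poly_(k < D.+1) x 0 (inord k).
have pn0 : p != 0.
  apply/eqP => p0; move: xs; rewrite /on_sphere /dotp big1 => [/esym/eqP|k _].
    by rewrite oner_eq0.
  have : p`_k = 0 by rewrite p0 coef0.
  by rewrite coef_poly ltn_ord inord_val => ->; rewrite mul0r.
have [t [st al sz]] := polyL n pn0.
have szp : ((size p).-1 <= D)%N by have := size_poly D.+1 (fun k => x 0 (inord k)); rewrite -/p; case: (size p).
have e : nonzero_terms (sgvec n x) = pmap id (Yp p n).
  rewrite /nonzero_terms pmap_idmap /Yp -val_enum_ord -map_comp; congr pmap.
  by apply: eq_map => i /=; rewrite ffunE dotp_w.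
rewrite -e in st; have := altX_ge st al; lia.
Qed.

Lemma ind0 (V : finType) (E : {set {set V}}) n (sigma : 'I_n -> V) (g : V -> 'I_n)
  (sK : cancel sigma g) (S : {set 'I_n}) (good : 'I_n -> Prop)
  (hS : forall i, i \in S -> good i)
  (hE : forall e, e \in E -> ~ (forall v, v \in e -> good (g v))) :
  n_induced_edges E (sigma @: S) = 0%N.
Proof.
apply/eqP; rewrite cards_eq0; apply/eqP/setP => e; rewrite !inE.
apply/negbTE/negP => /andP [eE sub]; apply: (hE e eE) => v ve.
have /imsetP [i iS ->] := subsetP sub v ve; rewrite sK; exact: hS.
Qed.

Lemma nrm_inj (R : realType) D n (i j : 'I_n) : (1 <= D)%N ->
  nrm (wpt D.+1 i) = nrm (wpt D.+1 j) :> 'rV[R]_D.+1 -> i = j.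
Proof.
move=> D1 e.
have e0 := congr1 (fun M : 'rV[R]_D.+1 => M 0 0) e.
have e1 := congr1 (fun M : 'rV[R]_D.+1 => M 0 (inord 1)) e.
move: e0 e1; rewrite /nrm !mxE !inordK ?ltnS // expr0 !mulr1 expr1.
set ci := (Num.sqrt _)^-1; set cj := (Num.sqrt _)^-1.
rewrite !mulrA => e0; rewrite e0 => /mulfI h.
apply: val_inj; apply/eqP; rewrite -(eqr_nat R) h //.
rewrite mulf_neq0 ?signr_eq0 // invr_eq0 gt_eqF // sqrtr_gt0; exact: dotp_w_pos.
Qed.

Unset Implicit Arguments.

Theorem corollary1 (R : realType) (V : finType) (E : {set {set V}}) (n : nat)
  (sigma : 'I_n -> V)
  (V_nonempty : (0 < #|V|)%N)
  (E_nonempty_edges : forall e, e \in E -> e != set0)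
  (sigma_bij : bijective sigma) :
  (* (a) *)
  (alt_hyp E sigma <> #|V| ->
   let d := (#|V| - alt_hyp E sigma - 1)%N in
   exists phi : V -> 'rV[R]_(d.+1),
     (forall v, on_sphere (phi v)) /\
     (forall x : 'rV[R]_(d.+1), on_sphere x ->
        exists2 e, e \in E &
          ((forall v, v \in e -> in_hemisphere x (phi v)) \/
           (forall v, v \in e -> in_hemisphere (- x) (phi v)))) /\
     ((1 <= d)%N -> injective phi))
  /\
  (* (b) *)
  (salt_hyp E sigma <> #|V| ->
   let d := (#|V| - salt_hyp E sigma - 1)%N in
   exists phi : V -> 'rV[R]_(d.+1),
     (forall v, on_sphere (phi v)) /\
     (forall x : 'rV[R]_(d.+1), on_sphere x ->
        exists2 e, e \in E &
          (forall v, v \in e -> in_hemisphere x (phi v))) /\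
     ((1 <= d)%N -> injective phi)).
Proof.
have [g sK gK] := sigma_bij.
have nV : #|V| = n by rewrite -(bij_eq_card sigma_bij) card_ord.
have wpos D i : 0 < dotp (wpt D.+1 i) (wpt D.+1 i) :> R by exact: dotp_w_pos.
have sgP D (x : 'rV[R]_D.+1) i b : sgvec n x i = Some b ->
    0 < (if b then dotp x (wpt D.+1 i) else dotp (- x) (wpt D.+1 i)).
  rewrite ffunE /sg dotpNl; case: eqP => // /eqP nz [<-].
  by case: ifP => // h; rewrite oppr_gt0 lt_neqAle nz /= leNgt h.
split.
- move=> ha d.
  have hle : (alt_hyp E sigma <= n)%N by apply/bigmax_leqP => X _; exact: altX_le.
  have aln : (alt_hyp E sigma < n)%N.
    by rewrite ltn_neqAle hle andbT; apply/eqP => e; apply: ha; rewrite nV.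
  exists (fun v => nrm (wpt d.+1 (g v))); split; first by move=> v; exact: nrm_sphere.
  split; last by move=> d1 u v /(nrm_inj d1) /(can_inj gK).
  move=> x xs; apply: NNPP => H.
  have hmax : maxn (n_induced_edges E (sigma @: Xplus (sgvec n x)))
                   (n_induced_edges E (sigma @: Xminus (sgvec n x))) == 0%N.
    rewrite (@ind0 _ E n sigma g sK _ (fun i => 0 < dotp x (wpt d.+1 i))).
    + rewrite (@ind0 _ E n sigma g sK _ (fun i => 0 < dotp (- x) (wpt d.+1 i))) //.
        by move=> i; rewrite inE => /eqP /sgP.
      move=> e eE he; apply: H; exists e => //; right => v ve.
      by apply/nrm_hemi => //; exact: he.
    + by move=> i; rewrite inE => /eqP /sgP.
    + move=> e eE he; apply: H; exists e => //; left => v ve.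
      by apply/nrm_hemi => //; exact: he.
  have h1 : (altX (sgvec n x) <= alt_hyp E sigma)%N.
    exact: (leq_bigmax_cond (sgvec n x) hmax).
  have h2 := @altX_sgvec R d n x xs.
  have hd : d = (n - alt_hyp E sigma - 1)%N by rewrite /d nV.
  move: h1 h2 hd aln; lia.
- move=> hb d.
  have hle : (salt_hyp E sigma <= n)%N by apply/bigmax_leqP => X _; exact: altX_le.
  have aln : (salt_hyp E sigma < n)%N.
    by rewrite ltn_neqAle hle andbT; apply/eqP => e; apply: hb; rewrite nV.
  exists (fun v => nrm (wpt d.+1 (g v))); split; first by move=> v; exact: nrm_sphere.
  split; last by move=> d1 u v /(nrm_inj d1) /(can_inj gK).
  move=> x xs; apply: NNPP => H.
  have hmin : minn (n_induced_edges E (sigma @: Xplus (sgvec n x)))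
                   (n_induced_edges E (sigma @: Xminus (sgvec n x))) == 0%N.
    rewrite (@ind0 _ E n sigma g sK _ (fun i => 0 < dotp x (wpt d.+1 i))); first by rewrite min0n.
    + by move=> i; rewrite inE => /eqP /sgP.
    + move=> e eE he; apply: H; exists e => // v ve.
      by apply/nrm_hemi => //; exact: he.
  have h1 : (altX (sgvec n x) <= salt_hyp E sigma)%N.
    exact: (leq_bigmax_cond (sgvec n x) hmin).
  have h2 := @altX_sgvec R d n x xs.
  have hd : d = (n - salt_hyp E sigma - 1)%N by rewrite /d nV.
  move: h1 h2 hd aln; lia.
Qed.
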